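(* For every positive integer $\ell$ and every real $\gamma\ge0$, \[ \sum_{d\mid \ell}c_\ell(d)\,d^{\gamma}\le\prod_{p^n\| \ell}(p^{-\gamma}+p^{\gamma})^n . \]
   Context: The Chebyshev coefficients $c_{j,n}$ ($0\le j\le n$) are defined by $x^n=\sum_{j=0}^n c_{j,n}U_j(x/2)$, with $U_j$ the Chebyshev polynomials of the second kind ($(1-2yx+x^2)^{-1}=\sum_{j\ge0}U_j(y)x^j$). For $d\mid\ell$, $c_\ell(d)=\prod_{p\mid\ell} c_{j_p,n_p}$ where $p^{j_p}\| d$ and $p^{n_p}\|\ell$. *)

(* Defs.v *)
From Stdlib Require Import Reals.
From mathcomp Require Import all_boot.
Set Implicit Arguments. Unset Strict Implicit. Unset Printing Implicit Defensive.
Local Open Scope R_scope.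

(* Chebyshev polynomials of the second kind, U_j : R -> R, given by the
   recurrence U_0 = 1, U_1 = 2y, U_{j+2} = 2y U_{j+1} - U_j, which is the
   coefficient recurrence of (1 - 2yx + x^2)^{-1} = sum_j U_j(y) x^j. *)
Fixpoint chebU (j : nat) (y : R) : R :=
  match j with
  | 0 => R1
  | S j' => match j' with
            | 0 => 2 * y
            | S j'' => 2 * y * chebU j' y - chebU j'' y
            end
  end.

Definition cl (c : nat -> nat -> R) (l d : nat) : R :=
  \big[Rmult/R1]_(p <- primes l) c (logn p d) (logn p l).

(* Main.v *)
Require Import Defs.
From Stdlib Require Import Reals Lra.
From mathcomp Require Import all_boot all_algebra.
From mathcomp Require Import Rstruct.
Import GRing.Theory Num.Theory.
Local Open Scope R_scope.

Lemma auxR1 x : x = 2 * (x / 2). Proof. field. Qed.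
Lemma auxR2 a b x : Rminus (Rmult b x) a = 2 * (x / 2) * b - a. Proof. field. Qed.

Section PolyPart.
Local Open Scope ring_scope.

Fixpoint Up (j : nat) : {poly R} :=
  match j with
  | 0 => 1
  | S j' => match j' with
            | 0 => 'X
            | S j'' => Up j' * 'X - Up j''
            end
  end.

Lemma Up_SS j : Up j.+2 = Up j.+1 * 'X - Up j. Proof. by []. Qed.

Lemma Up_eval j x : (Up j).[x] = chebU j (x / 2).
Proof.
suff: (Up j).[x] = chebU j (x / 2) /\ (Up j.+1).[x] = chebU j.+1 (x / 2) by case.
elim: j => [|j [IH1 IH2]].
  split; first by rewrite /= hornerE.
  by rewrite /= hornerX; exact: auxR1.
split => //.
rewrite Up_SS hornerD hornerN hornerMX IH1 IH2 /=.
exact: auxR2.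
Qed.

Lemma Up_monic j : Up j \is monic /\ size (Up j) = j.+1.
Proof.
suff: (Up j \is monic /\ size (Up j) = j.+1) /\ (Up j.+1 \is monic /\ size (Up j.+1) = j.+2) by case.
elim: j => [|j [[m1 s1] [m2 s2]]].
  by rewrite /= monic1 monicX size_poly1 size_polyX.
split => //.
have nz : Up j.+1 != 0 by rewrite -size_poly_gt0 s2.
have hs : size (Up j.+1 * 'X) = j.+3 by rewrite size_mulX // s2.
have hlt : leq (size (- Up j)).+1 (size (Up j.+1 * 'X)) by rewrite size_polyN hs s1.
rewrite Up_SS; split; last by rewrite size_polyDl // hs.
by rewrite monicE lead_coefDl // lead_coefMX (monicP m2).
Qed.

Lemma Up_uniq N (b : nat -> R) :
  \sum_(j < N) b j *: Up j = 0 -> forall j, (j < N)%N -> b j = 0.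
Proof.
elim: N => [|N IH] H j hj //.
move: H; rewrite big_ord_recr /= => H.
have hN : b N = 0.
  have := congr1 (fun p : {poly R} => p`_N) H.
  rewrite coefD coef_sum coefZ coef0.
  rewrite big1 ?add0r.
    by case: (Up_monic N) => /monicP m s; move: m; rewrite /lead_coef s /= => ->; rewrite mulr1.
  move=> i _; rewrite coefZ nth_default ?mulr0 //.
  by case: (Up_monic i) => _ ->; exact: ltn_ord.
move: H; rewrite hN scale0r addr0 => H.
case: (ltnP j N) => hjN; first exact: IH.
by have -> : j = N by apply/eqP; rewrite eqn_leq hjN -ltnS hj.
Qed.

Lemma fun_uniq N (b : nat -> R) :
  (forall x, \big[Rplus/R0]_(j < N) (Rmult (b j) (chebU j (Rdiv x 2))) = R0) ->
  forall j, (j < N)%N -> b j = R0.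
Proof.
move=> H; apply: Up_uniq.
pose rs := [seq (i%:R : R) | i <- iota 0 N].
apply: (@roots_geq_poly_eq0 _ _ rs).
- apply/allP => x _; rewrite /root horner_sum.
  apply/eqP; transitivity (\big[Rplus/R0]_(j < N) (Rmult (b j) (chebU j (Rdiv x 2)))); last exact: H x.
  apply: eq_bigr => i _.
  by rewrite hornerZ Up_eval.
- rewrite map_inj_uniq ?iota_uniq // => a c /eqP; rewrite eqr_nat => /eqP.
  done.
- rewrite size_map size_iota.
  apply: leq_trans (size_sum _ _ _) _.
  apply/bigmax_leqP => i _.
  apply: leq_trans (size_scale_leq _ _) _.
  by case: (Up_monic i) => _ ->; exact: ltn_ord.
Qed.

End PolyPart.



Lemma chebU_rec j y : 2 * y * chebU j y = chebU j.+1 y + (if j is j'.+1 then chebU j' y else 0).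
Proof. case: j => [|j] /=; [ring | destruct j; simpl; ring]. Qed.

Section Coef.
Variable c : nat -> nat -> R.
Hypothesis Hc : forall (n : nat) (x : R),
      pow x n = \big[Rplus/R0]_(j < n.+1) (c j n * chebU j (x / 2)).

Definition a n j := if (j <= n)%N then c j n else 0.

Lemma a_zero n j : (n < j)%N -> a n j = 0.
Proof. by rewrite /a ltnNge => /negbTE ->. Qed.

Lemma Ha n x : pow x n = \big[Rplus/R0]_(j < n.+1) (a n j * chebU j (x / 2)).
Proof. rewrite Hc; apply: eq_bigr => j _; by rewrite /a -ltnS ltn_ord. Qed.

Lemma a_rec n j : (j < n.+2)%N ->
  a n.+1 j = (if j is j'.+1 then a n j' else 0) + a n j.+1.
Proof.
pose r j := (if j is j'.+1 then a n j' else 0) + a n j.+1.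
suff H : forall j, (j < n.+2)%N -> a n.+1 j - r j = 0.
  by move=> hj; have := H j hj; rewrite /r; lra.
apply: fun_uniq => x.
have E1 : \big[Rplus/R0]_(j < n.+2) (a n.+1 j * chebU j (x / 2)) = pow x n.+1 by rewrite Ha.
have E2 : \big[Rplus/R0]_(j < n.+2) (r j * chebU j (x / 2)) = pow x n.+1.
  have -> : pow x n.+1 = x * pow x n by [].
  rewrite Ha big_distrr /=.
  rewrite (eq_bigr (fun j : 'I_n.+1 => a n j * chebU j.+1 (x/2) +
       a n j * (if (j : nat) is j'.+1 then chebU j' (x/2) else 0))); last first.
    move=> i _; have := chebU_rec i (x/2).
    have -> : 2 * (x / 2) = x by field.
    move=> h; transitivity (a n i * (x * chebU i (x / 2))); first ring.
    rewrite h; ring.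
  rewrite big_split /=.
  rewrite (eq_bigr (fun j : 'I_n.+2 => (if (j : nat) is j'.+1 then a n j' else 0) * chebU j (x/2)
          + a n j.+1 * chebU j (x/2))); last by move=> i _; rewrite /r; ring.
  rewrite big_split /=.
  congr Rplus.
    rewrite big_ord_recl /= Rmult_0_l Rplus_0_l.
    by apply: eq_bigr.
  rewrite [in RHS]big_ord_recl.
  rewrite big_ord_recr big_ord_recr /= (@a_zero n n.+1 (ltnSn n)) (@a_zero n n.+2 (ltnW (ltnSn n.+1))).
  rewrite ?mul0r ?mulr0 ?addr0 ?add0r ?Rmult_0_l ?Rmult_0_r ?Rplus_0_r ?Rplus_0_l.
  by apply: eq_bigr.
transitivity (\big[Rplus/R0]_(j < n.+2) (a n.+1 j * chebU j (x / 2)) +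
   (- 1) * \big[Rplus/R0]_(j < n.+2) (r j * chebU j (x / 2))); last by rewrite E1 E2; ring.
rewrite big_distrr -big_split /=; apply: eq_bigr => i _; ring.
Qed.

Lemma a_nonneg n j : 0 <= a n j.
Proof.
elim: n j => [|n IH] j.
  rewrite /a; case: j => [|j] /=; last lra.
  have := Hc 0 0; rewrite big_ord1 /= => H.
  lra.
case: (ltnP (n.+1) j) => hj; first by rewrite a_zero //; lra.
rewrite a_rec //; case: j hj => [|j] hj.
  have := IH 1%N; lra.
have := IH j; have := IH j.+2; lra.
Qed.

End Coef.

Lemma chebU_t t j : 0 < t ->
  chebU j.+1 ((t + / t) / 2) = t * chebU j ((t + / t) / 2) + pow (/ t) j.+1.
Proof.
move=> ht; elim: j => [|j IH].
  rewrite pow_1; set y := (t + / t) / 2.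
  change (2 * y = t * R1 + / t); rewrite /y; field; lra.
have -> : chebU j.+2 ((t + / t) / 2) = 2 * ((t + / t) / 2) * chebU j.+1 ((t + / t) / 2) - chebU j ((t + / t) / 2) by [].
have -> : pow (/ t) j.+2 = / t * pow (/ t) j.+1 by [].
rewrite !IH.
set u := chebU j _; set s := pow _ _.
field; lra.
Qed.

Lemma chebU_ge t j : 0 < t -> pow t j <= chebU j ((t + / t) / 2).
Proof.
move=> ht; elim: j => [|j IH]; first by rewrite /=; lra.
rewrite chebU_t //.
have : 0 < pow (/ t) j.+1 by apply: pow_lt; apply: Rinv_0_lt_compat.
have -> : pow t j.+1 = t * pow t j by [].
have := Rmult_le_compat_l t _ _ (Rlt_le _ _ ht) IH.
lra.
Qed.

Lemma divisors_coprime (F : nat -> R) a b : (0 < a)%N -> (0 < b)%N -> coprime a b ->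
  \big[Rplus/R0]_(d <- divisors (a * b)) F d =
  \big[Rplus/R0]_(x <- divisors a) \big[Rplus/R0]_(y <- divisors b) F (x * y)%N.
Proof.
move=> a0 b0 cab.
rewrite -(big_allpairs_dep (I2 := fun _ => nat) (h := fun x y : nat => (x * y)%N) (r1 := divisors a) (r2 := fun _ => divisors b) (F := F)).
apply: perm_big; apply: uniq_perm.
- exact: divisors_uniq.
- apply: allpairs_uniq; [exact: divisors_uniq | exact: divisors_uniq | ].
  move=> [x1 y1] [x2 y2] /allpairsP[[u1 v1] [/= hu1 hv1 [-> ->]]].
  move=> /allpairsP[[u2 v2] [/= hu2 hv2 [-> ->]]] /= e.
  move: hu1 hv1 hu2 hv2; rewrite -!dvdn_divisors // => hu1 hv1 hu2 hv2.
  have ex : forall u v : nat, (u %| a)%N -> (v %| b)%N -> (u = gcdn a (u * v))%N /\ (v = gcdn b (u * v))%N.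
    move=> u v hu hv.
    have cav : coprime a v by exact: (coprime_dvdr hv cab).
    have cbu : coprime b u by exact: (coprime_dvdr hu (etrans (coprime_sym b a) cab)).
    split.
      by rewrite (Gauss_gcdl _ cav); apply/esym/gcdn_idPr.
    by rewrite mulnC (Gauss_gcdl _ cbu); apply/esym/gcdn_idPr.
  have [h1 h2] := ex _ _ hu1 hv1; have [h3 h4] := ex _ _ hu2 hv2.
  by congr pair; [rewrite {1}h1 e -h3 | rewrite {1}h2 e -h4].
- move=> d; rewrite -dvdn_divisors ?muln_gt0 ?a0 //.
  apply/idP/allpairsP => [hd | [[x y] [/= hx hy ->]]]; last first.
    by apply: dvdn_mul; rewrite dvdn_divisors.
  exists (gcdn d a, gcdn d b) => /=.
  have ga : gcdn d a %| a by apply: dvdn_gcdr.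
  have gb : gcdn d b %| b by apply: dvdn_gcdr.
  split; first by rewrite -dvdn_divisors.
    by rewrite -dvdn_divisors.
  apply/eqP; rewrite eqn_dvd; apply/andP; split.
    have hg : gcdn d (a * b) = d by apply/gcdn_idPl.
    have g1 : gcdn d (a * b) %| d by apply: dvdn_gcdl.
    rewrite -{1}hg muln_gcdl !muln_gcdr !dvdn_gcd.
    by rewrite (dvdn_mulr _ g1) (dvdn_mulr _ g1) (dvdn_mull _ g1) dvdn_gcdr.
  rewrite Gauss_dvd ?dvdn_gcdl //.
  exact: (coprime_dvdl ga (coprime_dvdr gb cab)).
Qed.

Lemma INR_muln m n : INR (m * n)%N = INR m * INR n.
Proof. exact: mult_INR. Qed.

Lemma INR_expn p j : INR (p ^ j)%N = pow (INR p) j.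
Proof. elim: j => [|j IH]; first by rewrite expn0. by rewrite expnS INR_muln IH. Qed.

Lemma Rpower_pos x y : 0 < Rpower x y.
Proof. rewrite /Rpower; apply: exp_pos. Qed.

Lemma Rpower_1l y : Rpower 1 y = 1.
Proof. by rewrite /Rpower ln_1 Rmult_0_r exp_0. Qed.

Lemma INR_pos n : (0 < n)%N -> 0 < INR n.
Proof. by move=> h; apply: lt_0_INR; apply/ltP. Qed.

Lemma Rpower_split p j y g : (0 < p)%N -> (0 < y)%N ->
  Rpower (INR (p ^ j * y)%N) g = pow (Rpower (INR p) g) j * Rpower (INR y) g.
Proof.
move=> p0 y0.
have hp := INR_pos _ p0; have hy := INR_pos _ y0.
have hpj : Rpower (pow (INR p) j) g = pow (Rpower (INR p) g) j.
  rewrite -Rpower_pow // Rpower_mult Rmult_comm -Rpower_mult Rpower_pow //.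
  exact: Rpower_pos.
rewrite INR_muln INR_expn -Rpower_mult_distr ?hpj //; exact: pow_lt.
Qed.

Lemma divisors_pfactor (F : nat -> R) p n : prime p ->
  \big[Rplus/R0]_(d <- divisors (p ^ n)) F d = \big[Rplus/R0]_(j < n.+1) F (p ^ j)%N.
Proof.
move=> pp.
rewrite -(big_mkord (fun _ => true) (fun j => F (p ^ j)%N)).
rewrite -(big_map (fun j => (p ^ j)%N) (fun _ => true) F).
apply: perm_big; apply: uniq_perm.
- exact: divisors_uniq.
- rewrite map_inj_uniq ?iota_uniq //; apply: expnI; exact: prime_gt1.
- move=> d; rewrite -dvdn_divisors ?expn_gt0 ?prime_gt0 //.
  apply/(dvdn_pfactor _ _ pp)/mapP => [[m hm ->] | [m hm ->]]; exists m => //.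
    by rewrite mem_iota.
  by move: hm; rewrite mem_iota.
Qed.

Lemma prime_bound (c : nat -> nat -> R)
  (Hc : forall (n : nat) (x : R),
      pow x n = \big[Rplus/R0]_(j < n.+1) (c j n * chebU j (x / 2)))
  t n : 0 < t ->
  \big[Rplus/R0]_(j < n.+1) (c j n * pow t j) <= pow (/ t + t) n.
Proof.
move=> ht.
rewrite Rplus_comm (Hc n (t + / t)).
apply: (big_ind2 (fun x y => x <= y)); first lra.
  by move=> x1 x2 y1 y2 h1 h2; lra.
move=> j _.
have hc : 0 <= c j n.
  have := @a_nonneg c Hc n j; rewrite /a -ltnS ltn_ord; done.
apply: Rmult_le_compat_l => //; exact: chebU_ge.
Qed.

Lemma prime_sum_nonneg (c : nat -> nat -> R)
  (Hc : forall (n : nat) (x : R),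
      pow x n = \big[Rplus/R0]_(j < n.+1) (c j n * chebU j (x / 2)))
  t n : 0 < t ->
  0 <= \big[Rplus/R0]_(j < n.+1) (c j n * pow t j).
Proof.
move=> ht.
apply: (big_ind (fun x => 0 <= x)); first lra.
  by move=> x y h1 h2; lra.
move=> j _.
have hc : 0 <= c j n.
  have := @a_nonneg c Hc n j; rewrite /a -ltnS ltn_ord; done.
apply: Rmult_le_pos => //; apply: pow_le; lra.
Qed.

Theorem lemma6p1 (c : nat -> nat -> R)
  (Hc : forall (n : nat) (x : R),
      pow x n = \big[Rplus/R0]_(j < n.+1) (c j n * chebU j (x / 2)))
  (l : nat) (gamma : R) :
  (0 < l)%nat -> (0 <= gamma) ->
  (\big[Rplus/R0]_(d <- divisors l) (cl c l d * Rpower (INR d) gamma)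
   <= \big[Rmult/R1]_(p <- primes l)
        pow (Rpower (INR p) (- gamma) + Rpower (INR p) gamma) (logn p l)).
Proof.
move=> + g0.
elim/ltn_ind: l => l IH l0.
have Pnn : forall k, 0 <= \big[Rmult/R1]_(p <- primes k)
        pow (Rpower (INR p) (- gamma) + Rpower (INR p) gamma) (logn p k).
  move=> k; apply: (big_ind (fun x => 0 <= x)); first lra.
    by move=> x y h1 h2; apply: Rmult_le_pos.
  move=> q _; apply: pow_le; have := Rpower_pos (INR q) (- gamma);
  have := Rpower_pos (INR q) gamma; lra.
case: (ltnP 1 l) => hl; last first.
  have -> : l = 1%N by apply/eqP; rewrite eqn_leq hl l0.
  have -> : divisors 1 = [:: 1%N] by [].
  have -> : primes 1 = [::] by [].
  rewrite big_cons !big_nil /cl big_nil Rpower_1l; lra.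
set p := pdiv l.
have pp : prime p := pdiv_prime hl.
have [m cpm El] := pfactor_coprime pp l0.
set n := logn p l in El *.
have p0 : (0 < p)%N := prime_gt0 pp.
have m0 : (0 < m)%N by move: l0; rewrite El muln_gt0 => /andP[].
have n0 : (0 < n)%N by rewrite /n logn_gt0 mem_primes pp l0 pdiv_dvd.
have pn1 : (1 < p ^ n)%N by rewrite -{1}(expn0 p) ltn_exp2l // prime_gt1.
have ml : (m < l)%N by rewrite El ltn_Pmulr.
have pnm : (p \notin primes m).
  by rewrite mem_primes pp m0 /= -prime_coprime.
have Eprimes : perm_eq (primes l) (p :: primes m).
  apply: uniq_perm; first exact: primes_uniq.
    by rewrite /= pnm primes_uniq.
  move=> q; rewrite El primesM ?expn_gt0 ?p0 // primesX // (primes_prime pp) !inE.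
  by rewrite orbC.
set t := Rpower (INR p) gamma.
have ht : 0 < t by apply: Rpower_pos.
have loglq : forall q, q \in primes m -> logn q l = logn q m.
  move=> q hq; have qp : q != p by apply: contraNneq pnm => <-.
  rewrite El lognM ?expn_gt0 ?p0 // lognX (logn_prime _ pp) (negbTE qp) muln0 addn0 //.
have EL : \big[Rplus/R0]_(d <- divisors l) (cl c l d * Rpower (INR d) gamma) =
   \big[Rplus/R0]_(j < n.+1) (c j n * pow t j) *
   \big[Rplus/R0]_(d <- divisors m) (cl c m d * Rpower (INR d) gamma).
  have -> : divisors l = divisors (p ^ n * m) by rewrite {1}El mulnC.
  rewrite divisors_coprime ?expn_gt0 ?p0 //; last exact: coprimeXl.
  rewrite divisors_pfactor // big_distrl /=; apply: eq_bigr => j _.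
  rewrite big_distrr /=; apply: eq_big_seq => y.
  rewrite -dvdn_divisors // => hy.
  have y0 : (0 < y)%N by apply: dvdn_gt0 m0 hy.
  rewrite Rpower_split //.
  have -> : cl c l (p ^ j * y) = c j n * cl c m y.
    rewrite /cl (perm_big _ Eprimes) big_cons.
    have -> : logn p (p ^ j * y) = j.
      rewrite lognM ?expn_gt0 ?p0 // lognX (logn_prime _ pp) eqxx muln1.
      by rewrite logn_coprime ?addn0 //; exact: (coprime_dvdr hy cpm).
    congr (_ * _); apply: eq_big_seq => q hq.
    have qp : q != p by apply: contraNneq pnm => <-.
    rewrite loglq // lognM ?expn_gt0 ?p0 // lognX (logn_prime _ pp) (negbTE qp) muln0 add0n //.
  rewrite -/t; ring.
have EP : \big[Rmult/R1]_(q <- primes l)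
        pow (Rpower (INR q) (- gamma) + Rpower (INR q) gamma) (logn q l) =
      pow (/ t + t) n * \big[Rmult/R1]_(q <- primes m)
        pow (Rpower (INR q) (- gamma) + Rpower (INR q) gamma) (logn q m).
  rewrite (perm_big _ Eprimes) big_cons Rpower_Ropp.
  congr (_ * _); apply: eq_big_seq => q hq; by rewrite loglq.
rewrite EL EP.
have IHm := IH m ml m0.
have hA := prime_sum_nonneg c Hc t n ht.
have hB := prime_bound c Hc t n ht.
have hPm := Pnn m.
apply: Rle_trans (Rmult_le_compat_l _ _ _ hA IHm) _.
by apply: Rmult_le_compat_r.
Qed.
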